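(* Let $K$ be an algebraically closed field and $\mathcal{T}$ a $\operatorname{Hom}$-finite Krull–Schmidt triangulated $K$-category with shift $[1]$. Let $\mathcal{I}$ be a functorially finite ideal of $\mathcal{T}$. Then $\mathcal{I}$ is an Auslander–Reiten ideal if and only if (1) $\mathrm{Gh}_{\mathcal{I}}=\mathrm{CoGh}_{\mathcal{I}[1]}$, and (2) for every indecomposable object $X\in\mathcal{T}$ with $X\notin\operatorname{Ob}(\mathcal{I})$, each $\mathrm{Gh}_{\mathcal{I}}$-source map of $X$ is a $\mathrm{Gh}_{\mathcal{I}}$-sink map, and each $\mathrm{Gh}_{\mathcal{I}}$-sink map of $X[1]$ is a $\mathrm{Gh}_{\mathcal{I}}$-source map.
   Context: Composition of $f:X\to Y$ and $g:Y\to Z$ is written $gf$. An ideal $\mathcal{I}$ of $\mathcal{T}$ is a collection of subgroups $\mathcal{I}(X,Y)\subseteq\operatorname{Hom}(X,Y)$ with $hgf\in\mathcal{I}$ whenever $g\in\mathcal{I}$. $\mathcal{I}[1]=\{f[1]: f\in\mathcal{I}\}$. $\operatorname{Ob}(\mathcal{I})$ is the full subcategory of objects $X$ with $\mathrm{id}_X\in\mathcal{I}$. $\mathrm{Gh}_{\mathcal{I}}=\{f: fi=0 \text{ for all } i\in\mathcal{I} \text{ composable with } f\}$ and $\mathrm{CoGh}_{\mathcal{I}}=\{f: if=0 \text{ for all } i\in\mathcal{I}\text{ composable with } f\}$; these are ideals. For an ideal $\mathcal{A}$: a morphism $i:X\to T$ is a right $\mathcal{A}$-approximation of $T$ if $i\in\mathcal{A}$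 and every $j:X'\to T$ in $\mathcal{A}$ factors through $i$; left $\mathcal{A}$-approximations are dual. $\mathcal{A}$ is functorially finite if every object has both a left and a right $\mathcal{A}$-approximation. A morphism $f:X\to M$ is left minimal if it has no direct summand of the form $0\to M_1$ with $M_1\neq 0$ (equivalently $gf=f$ implies $g$ is an isomorphism); right minimal dually. An $\mathcal{A}$-source map (resp. $\mathcal{A}$-sink map) of an object is a left minimal left $\mathcal{A}$-approximation of it (resp. right minimal right $\mathcal{A}$-approximation of it). A functorially finite ideal $\mathcal{I}$ is an Auslander–Reiten ideal if for every $X\in\mathcal{T}$ there is a triangle $X\xrightarrow{f}M\xrightarrow{g}Y\to X[1]$ with $f$ a left $\mathcal{I}$-approximation and $g$ a right $\mathcal{I}$-approximation, and for every $Y\in\mathcal{T}$ there is a triangle $Z\xrightarrow{u}N\xrightarrow{v}Y\to Z[1]$ with $u$ a left $\mathcal{I}$-approximation and $v$ a right $\mathcal{I}$-approximation. *)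

(* Defs.v *)
From HB Require Import structures.
From mathcomp Require Import all_boot all_order all_algebra.
Set Implicit Arguments. Unset Strict Implicit. Unset Printing Implicit Defensive.
Import GRing.Theory.
Local Open Scope ring_scope.

(* A K-linear category whose Mor spaces are finite-dimensional K-vector spaces
   (vectType = finite-dimensional vector space): Mor-finite K-category. *)
Record KCat (K : fieldType) := {
  Obj :> Type;
  Mor : Obj -> Obj -> vectType K;
  idm : forall X, Mor X X;
  comp : forall X Y Z, Mor Y Z -> Mor X Y -> Mor X Z;
  compA : forall X Y Z W (h : Mor Z W) (g : Mor Y Z) (f : Mor X Y),
      comp h (comp g f) = comp (comp h g) f;
  comp_id_l : forall X Y (f : Mor X Y), comp (idm Y) f = f;
  comp_id_r : forall X Y (f : Mor X Y), comp f (idm X) = f;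
  comp_linl : forall X Y Z (f : Mor X Y) (a : K) (g1 g2 : Mor Y Z),
      comp (a *: g1 + g2) f = a *: comp g1 f + comp g2 f;
  comp_linr : forall X Y Z (g : Mor Y Z) (a : K) (f1 f2 : Mor X Y),
      comp g (a *: f1 + f2) = a *: comp g f1 + comp g f2
}.
Arguments Mor {K C} X Y : rename.
Arguments idm {K C} X : rename.
Arguments comp {K C X Y Z} g f : rename.

Section Basic.
Variables (K : fieldType) (C : KCat K).

Definition iso (X Y : C) (f : Mor X Y) :=
  exists g : Mor Y X, comp g f = idm X /\ comp f g = idm Y.

Definition is_zero (X : C) := idm X = 0.

Definition is_biproduct (A B S : C) (i1 : Mor A S) (i2 : Mor B S)
  (p1 : Mor S A) (p2 : Mor S B) :=
  [/\ comp p1 i1 = idm A, comp p2 i2 = idm B, comp p2 i1 = 0, comp p1 i2 = 0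
    & comp i1 p1 + comp i2 p2 = idm S].

Definition additive :=
  (exists Z : C, is_zero Z) /\
  forall A B : C, exists (S : C) (i1 : Mor A S) (i2 : Mor B S)
    (p1 : Mor S A) (p2 : Mor S B), is_biproduct i1 i2 p1 p2.

Definition local_end (X : C) :=
  idm X != 0 /\ forall a : Mor X X, iso a \/ iso (idm X - a).

Definition krull_schmidt :=
  forall X : C, exists (n : nat) (Xs : 'I_n -> C)
    (inj : forall i, Mor (Xs i) X) (pr : forall i, Mor X (Xs i)),
    [/\ forall i, comp (pr i) (inj i) = idm (Xs i),
        forall i j, i != j -> comp (pr j) (inj i) = 0,
        \sum_(i < n) comp (inj i) (pr i) = idm X
      & forall i, local_end (Xs i)].

Definition indecomposable (X : C) :=
  ~ is_zero X /\
  forall (A B : C) (i1 : Mor A X) (i2 : Mor B X) (p1 : Mor X A) (p2 : Mor X B),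
    is_biproduct i1 i2 p1 p2 -> is_zero A \/ is_zero B.

End Basic.

Record Triangulated (K : fieldType) (C : KCat K) := {
  sh : C -> C;
  shm : forall X Y : C, Mor X Y -> Mor (sh X) (sh Y);
  shm_lin : forall (X Y : C) (a : K) (f g : Mor X Y),
      shm (a *: f + g) = a *: shm f + shm g;
  shm_id : forall X : C, shm (idm X) = idm (sh X);
  shm_comp : forall (X Y Z : C) (g : Mor Y Z) (f : Mor X Y),
      shm (comp g f) = comp (shm g) (shm f);
  shm_inj : forall (X Y : C) (f g : Mor X Y), shm f = shm g -> f = g;
  shm_surj : forall (X Y : C) (g : Mor (sh X) (sh Y)), exists f, shm f = g;
  sh_esurj : forall Y : C, exists (X : C) (a : Mor (sh X) Y), iso a;
  dist : forall X Y Z : C, Mor X Y -> Mor Y Z -> Mor Z (sh X) -> Prop;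
  dist_iso : forall (X Y Z X' Y' Z' : C)
      (f : Mor X Y) (g : Mor Y Z) (h : Mor Z (sh X))
      (f' : Mor X' Y') (g' : Mor Y' Z') (h' : Mor Z' (sh X'))
      (a : Mor X X') (b : Mor Y Y') (c : Mor Z Z'),
      dist f g h -> iso a -> iso b -> iso c ->
      comp b f = comp f' a -> comp c g = comp g' b ->
      comp (shm a) h = comp h' c -> dist f' g' h';
  dist_idm : forall X Z : C, is_zero Z ->
      dist (idm X) (0 : Mor X Z) (0 : Mor Z (sh X));
  dist_ext : forall (X Y : C) (f : Mor X Y),
      exists (Z : C) (g : Mor Y Z) (h : Mor Z (sh X)), dist f g h;
  dist_rot : forall (X Y Z : C) (f : Mor X Y) (g : Mor Y Z) (h : Mor Z (sh X)),
      dist f g h <-> dist g h (- shm f);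
  dist_morph : forall (X Y Z X' Y' Z' : C)
      (f : Mor X Y) (g : Mor Y Z) (h : Mor Z (sh X))
      (f' : Mor X' Y') (g' : Mor Y' Z') (h' : Mor Z' (sh X'))
      (a : Mor X X') (b : Mor Y Y'),
      dist f g h -> dist f' g' h' -> comp b f = comp f' a ->
      exists c : Mor Z Z', comp c g = comp g' b /\ comp (shm a) h = comp h' c;
  dist_oct : forall (X Y Z Z' X' Y' : C)
      (u : Mor X Y) (j : Mor Y Z') (k : Mor Z' (sh X))
      (v : Mor Y Z) (l : Mor Z X') (i : Mor X' (sh Y))
      (m : Mor Z Y') (n : Mor Y' (sh X)),
      dist u j k -> dist v l i -> dist (comp v u) m n ->
      exists (f : Mor Z' Y') (g : Mor Y' X'),
        [/\ dist f g (comp (shm j) i),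
            comp m v = comp f j, k = comp n f, l = comp g m
          & comp (shm u) n = comp i g]
}.
Arguments sh {K C} T X : rename.
Arguments shm {K C} T {X Y} f : rename.
Arguments dist {K C} T {X Y Z} f g h : rename.

Section Ideals.
Variables (K : fieldType) (C : KCat K).

Definition mor_class := forall X Y : C, Mor X Y -> Prop.

Definition is_ideal (I : mor_class) :=
  [/\ forall X Y : C, I X Y 0,
      forall (X Y : C) (f g : Mor X Y), I X Y f -> I X Y g -> I X Y (f - g)
    & forall (W X Y Z : C) (f : Mor W X) (g : Mor X Y) (h : Mor Y Z),
        I X Y g -> I W Z (comp h (comp g f))].

Definition ObI (I : mor_class) (X : C) := I X X (idm X).

Definition Gh (I : mor_class) : mor_class := fun X Y f =>
  forall (W : C) (i : Mor W X), I W X i -> comp f i = 0.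

Definition CoGh (I : mor_class) : mor_class := fun X Y f =>
  forall (W : C) (i : Mor Y W), I Y W i -> comp i f = 0.

(* I[1] = { f[1] : f in I }, transported along isomorphisms X ~ X'[1] *)
Definition shift_ideal (T : Triangulated C) (I : mor_class) : mor_class :=
  fun X Y g => exists (X' Y' : C) (a : Mor X (sh T X')) (b : Mor (sh T Y') Y)
    (f : Mor X' Y'), [/\ iso a, iso b, I X' Y' f & g = comp b (comp (shm T f) a)].

Definition right_approx (A : mor_class) (X T : C) (i : Mor X T) :=
  A X T i /\ forall (X' : C) (j : Mor X' T), A X' T j ->
    exists h : Mor X' X, j = comp i h.

Definition left_approx (A : mor_class) (T X : C) (i : Mor T X) :=
  A T X i /\ forall (X' : C) (j : Mor T X'), A T X' j ->
    exists h : Mor X X', j = comp h i.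

Definition functorially_finite (A : mor_class) :=
  forall T : C, (exists (X : C) (i : Mor T X), left_approx A i) /\
                (exists (X : C) (i : Mor X T), right_approx A i).

Definition left_minimal (X M : C) (f : Mor X M) :=
  forall g : Mor M M, comp g f = f -> iso g.

Definition right_minimal (M Y : C) (f : Mor M Y) :=
  forall g : Mor M M, comp f g = f -> iso g.

Definition source_map (A : mor_class) (X M : C) (f : Mor X M) :=
  left_approx A f /\ left_minimal f.

Definition sink_map (A : mor_class) (M Y : C) (f : Mor M Y) :=
  right_approx A f /\ right_minimal f.

Definition AR_ideal (T : Triangulated C) (I : mor_class) :=
  [/\ functorially_finite I,
      forall X : C, exists (M Y : C) (f : Mor X M) (g : Mor M Y) (h : Mor Y (sh T X)),
        [/\ dist T f g h, left_approx I f & right_approx I g]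
    & forall Y : C, exists (Z N : C) (u : Mor Z N) (v : Mor N Y) (w : Mor Y (sh T Z)),
        [/\ dist T u v w, left_approx I u & right_approx I v]].

End Ideals.

(* Main.v *)
From HB Require Import structures.
From mathcomp Require Import all_boot all_order all_algebra.
From Stdlib Require Import Classical.
Require Import Defs.

Module Dev.
Set Implicit Arguments. Unset Strict Implicit. Unset Printing Implicit Defensive.
Import GRing.Theory.

Section Basics.
Local Open Scope ring_scope.
Variables (K : fieldType) (C : KCat K).
Implicit Types X Y Z W : C.

Lemma comp0l X Y Z (f : Mor X Y) : comp (0 : Mor Y Z) f = 0.
Proof.
have := comp_linl f 1 (0 : Mor Y Z) 0; rewrite !scale1r addr0 => H.
by apply: (addrI (comp (0 : Mor Y Z) f)); rewrite addr0 -H.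
Qed.
Lemma comp0r X Y Z (g : Mor Y Z) : comp g (0 : Mor X Y) = 0.
Proof.
have := comp_linr g 1 (0 : Mor X Y) 0; rewrite !scale1r addr0 => H.
by apply: (addrI (comp g (0 : Mor X Y))); rewrite addr0 -H.
Qed.
Lemma compDl X Y Z (f : Mor X Y) (g1 g2 : Mor Y Z) :
  comp (g1 + g2) f = comp g1 f + comp g2 f.
Proof. by have := comp_linl f 1 g1 g2; rewrite !scale1r. Qed.
Lemma compDr X Y Z (g : Mor Y Z) (f1 f2 : Mor X Y) :
  comp g (f1 + f2) = comp g f1 + comp g f2.
Proof. by have := comp_linr g 1 f1 f2; rewrite !scale1r. Qed.
Lemma compZl X Y Z (f : Mor X Y) a (g : Mor Y Z) : comp (a *: g) f = a *: comp g f.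
Proof. by have := comp_linl f a g 0; rewrite !addr0 comp0l addr0. Qed.
Lemma compZr X Y Z (g : Mor Y Z) a (f : Mor X Y) : comp g (a *: f) = a *: comp g f.
Proof. by have := comp_linr g a f 0; rewrite !addr0 comp0r addr0. Qed.
Lemma compNl X Y Z (f : Mor X Y) (g : Mor Y Z) : comp (- g) f = - comp g f.
Proof. by rewrite -scaleN1r compZl scaleN1r. Qed.
Lemma compNr X Y Z (g : Mor Y Z) (f : Mor X Y) : comp g (- f) = - comp g f.
Proof. by rewrite -scaleN1r compZr scaleN1r. Qed.
Lemma compBl X Y Z (f : Mor X Y) (g1 g2 : Mor Y Z) :
  comp (g1 - g2) f = comp g1 f - comp g2 f.
Proof. by rewrite compDl compNl. Qed.
Lemma compBr X Y Z (g : Mor Y Z) (f1 f2 : Mor X Y) :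
  comp g (f1 - f2) = comp g f1 - comp g f2.
Proof. by rewrite compDr compNr. Qed.
Lemma comp_suml X Y Z (f : Mor X Y) I (r : seq I) (P : pred I) (F : I -> Mor Y Z) :
  comp (\sum_(i <- r | P i) F i) f = \sum_(i <- r | P i) comp (F i) f.
Proof. by apply: (big_morph (fun g => comp g f)); [exact: compDl|exact: comp0l]. Qed.
Lemma comp_sumr X Y Z (g : Mor Y Z) I (r : seq I) (P : pred I) (F : I -> Mor X Y) :
  comp g (\sum_(i <- r | P i) F i) = \sum_(i <- r | P i) comp g (F i).
Proof. by apply: (big_morph (fun f => comp g f)); [exact: compDr|exact: comp0r]. Qed.

Definition cA := compA.
Definition cid_l := comp_id_l.
Definition cid_r := comp_id_r.

Lemma iso_idm X : iso (idm X).
Proof. by exists (idm X); rewrite cid_l. Qed.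

Lemma iso_comp X Y Z (f : Mor X Y) (g : Mor Y Z) : iso f -> iso g -> iso (comp g f).
Proof.
move=> [f' [Hf1 Hf2]] [g' [Hg1 Hg2]]; exists (comp f' g'); split.
  by rewrite cA -(cA f') Hg1 cid_r.
by rewrite cA -(cA g) Hf2 cid_r.
Qed.

Lemma iso_sym X Y (f : Mor X Y) (g : Mor Y X) : comp g f = idm X -> comp f g = idm Y -> iso g.
Proof. by move=> H1 H2; exists f. Qed.

Lemma is_zero_mor X Y (f : Mor X Y) : is_zero X -> f = 0.
Proof. by move=> H; rewrite -(cid_r f) H comp0r. Qed.
Lemma is_zero_mor' X Y (f : Mor X Y) : is_zero Y -> f = 0.
Proof. by move=> H; rewrite -(cid_l f) H comp0l. Qed.

Fixpoint powm X (g : Mor X X) n : Mor X X :=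
  if n is n'.+1 then comp g (powm g n') else idm X.

Lemma powmD X (g : Mor X X) m n : powm g (m + n) = comp (powm g m) (powm g n).
Proof. elim: m => [|m IH] /=; first by rewrite cid_l. by rewrite IH cA. Qed.
Lemma powmS' X (g : Mor X X) n : powm g n.+1 = comp (powm g n) g.
Proof. by rewrite -addn1 powmD /= cid_r. Qed.

Lemma comm_powm X (g u : Mor X X) n : comp g u = comp u g ->
  comp (powm g n) u = comp u (powm g n).
Proof.
move=> H; elim: n => [|n IH] /=; first by rewrite cid_l cid_r.
by rewrite -cA IH !cA H.
Qed.

Lemma powm_comm_mul X (g u : Mor X X) n : comp g u = comp u g ->
  powm (comp g u) n = comp (powm g n) (powm u n).
Proof.
move=> H; elim: n => [|n IH] /=; first by rewrite cid_l.
rewrite IH -!cA; congr comp; rewrite !cA; congr comp.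
symmetry; apply: comm_powm; done.
Qed.

End Basics.

Section Fitting.
Local Open Scope ring_scope.
Variables (K : fieldType) (C : KCat K).
Implicit Types X Y Z W : C.

Lemma span_pow X (g : Mor X X) a n (v : Mor X X) :
  v \in <<[seq powm g j | j <- iota a n]>>%VS ->
  exists2 u : Mor X X, v = comp (powm g a) u & comp g u = comp u g.
Proof.
set s := [seq _ | _ <- _] => Hv.
have := coord_span (X := in_tuple s) Hv => ->.
exists (\sum_(i < size s) coord (in_tuple s) i v *: powm g i).
  rewrite comp_sumr; apply: eq_bigr => i _.
  rewrite compZr -powmD; congr (_ *: _).
  have Hi : (i < n)%N by rewrite -[n](size_iota a) -(size_map (powm g)) ltn_ord.
  by rewrite /= (nth_map 0%N) ?size_iota // nth_iota.
rewrite comp_sumr comp_suml; apply: eq_bigr => i _.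
rewrite compZr compZl; congr (_ *: _).
by rewrite -[comp g _]/(powm g i.+1) powmS'.
Qed.

Lemma fitting X (g : Mor X X) : ~ iso g ->
  exists m (u : Mor X X), comp g u = comp u g /\ powm g m.+1 = comp (powm g m.+2) u.
Proof.
move=> Hni.
set D := \dim (fullv : {vspace Mor X X}).
set s := [seq powm g j | j <- iota 0 D.+1].
have Hnf : ~~ free (in_tuple s).
  apply/negP => /eqP Hf.
  have := dimvS (subvf <<s>>%VS); rewrite -/D.
  by rewrite /= Hf size_map size_iota ltnn.
move: Hnf; rewrite freeNE => /existsP [i].
have Hi : (i < D.+1)%N by rewrite -[D.+1](size_iota 0) -(size_map (powm g)) ltn_ord.
rewrite /= (nth_map 0%N) ?size_iota // nth_iota // add0n.
rewrite -map_drop drop_iota => Hv; have [u Hu Hc] := span_pow Hv.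
move: Hu; rewrite add1n; case: (nat_of_ord i) => [|m] Hu.
  exfalso; apply: Hni; exists u; split; last by rewrite /= cid_r in Hu.
  by rewrite -Hc; rewrite /= cid_r in Hu.
by exists m, u.
Qed.

Lemma fitting_idem W X (g : Mor X X) (f : Mor W X) : ~ iso g -> comp g f = f ->
  exists e : Mor X X, [/\ comp e e = e, comp e f = f & e <> idm X].
Proof.
move=> Hni Hgf.
have [m [u [Hc Hm]]] := fitting Hni.
set n := m.+1 in Hm *.
set G := powm g n in Hm *.
have HG : G = comp G (comp g u) by rewrite {1}Hm powmS' -/G -cA.
have HGj : forall j, G = comp G (powm (comp g u) j).
  elim=> [|j IH] /=; first by rewrite cid_r.
  by rewrite cA -HG.
set U := powm u n.
have HGU : G = comp G (comp G U) by rewrite {1}(HGj n) powm_comm_mul.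
have HUg : comp U g = comp g U by rewrite /U; apply: comm_powm; rewrite Hc.
have HUG : comp U G = comp G U.
  rewrite /U /G; apply: comm_powm; symmetry; apply: comm_powm; done.
have Hpf : forall k, comp (powm g k) f = f.
  by elim=> [|k IH] /=; [rewrite cid_l | rewrite -cA IH].
have HeG : comp (comp G U) G = G by rewrite -cA HUG -HGU.
exists (comp G U); split.
- by rewrite -cA (cA U) HUG (cA G) -HGU.
- by rewrite -{1}(Hpf n) -/G cA HeG Hpf.
- move=> HE; apply: Hni; exists (comp (powm g m) U); split.
    by rewrite -cA HUg cA -powmS' -/G HE.
  by rewrite cA; exact: HE.
Qed.

End Fitting.

Ltac cn := rewrite ?compDl ?compDr ?compNl ?compNr ?comp0l ?comp0r ?cid_l ?cid_r -?cA.

Section Split.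
Local Open Scope ring_scope.
Variables (K : fieldType) (C : KCat K).
Implicit Types X Y Z W : C.

Lemma cext X Y Z W (h : Mor Y Z) (g : Mor X Y) (f : Mor X Z) (x : Mor W X) :
  comp h g = f -> comp h (comp g x) = comp f x.
Proof. by move=> <-; rewrite cA. Qed.

Definition splits X (e : Mor X X) :=
  exists (Q : C) (r : Mor X Q) (s : Mor Q X), comp r s = idm Q /\ comp s r = e.

Lemma split_step M A (E E' g : Mor M M) (i : Mor A M) (p : Mor M A) (i1 : Mor A M)
  (a' : Mor A A) :
  E = E' + comp i p -> comp E' E' = E' -> comp E i1 = i1 ->
  comp (comp p i1) a' = idm A ->
  comp g g = g -> comp g E = g -> comp g i1 = 0 ->
  (forall g', comp g' g' = g' -> comp g' E' = g' -> comp E' g' = g' -> splits g') ->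
  splits g.
Proof.
move=> HE HE'E' Hi1 Ha Hgg HgE Hgi1 IH.
set P1 := comp i1 (comp a' p).
set R := E' - comp E' P1.
have HE'i1 : comp E' i1 = i1 - comp i (comp p i1).
  by rewrite -{2}Hi1 HE compDl -cA addrK.
have HE'P1 : comp E' P1 = P1 - comp i p.
  rewrite /P1 cA HE'i1 compDl compNl; congr (_ - _).
  by rewrite -cA (cA (comp p i1)) Ha cid_l.
have HgP1 : comp g P1 = 0 by rewrite /P1 cA Hgi1 comp0l.
have HgE' : comp g E' = g - comp g (comp i p).
  by rewrite -{2}HgE HE compDr addrK.
have HER : comp E' R = R.
  by rewrite /R compDr compNr HE'E' (cA E' E') HE'E'.
have HgR : comp g R = g.
  rewrite /R compDr compNr HE'P1 compDr compNr HgP1 HgE' sub0r opprK.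
  by rewrite subrK.
set g' := comp R (comp g E').
have HgE'R : comp g (comp E' R) = g by rewrite HER.
have Hg'g' : comp g' g' = g'.
  by rewrite /g' -!cA (cA E' R) HER (cA g R) HgR (cA g g) Hgg.
have Hg'E' : comp g' E' = g' by rewrite /g' -!cA HE'E'.
have HE'g' : comp E' g' = g' by rewrite /g' cA HER.
have [Q [r' [s' [Hrs Hsr]]]] := IH g' Hg'g' Hg'E' HE'g'.
exists Q, (comp r' (comp R g)), (comp g (comp E' s')); split.
  rewrite -!cA (cA g g) Hgg.
  have -> : comp R (comp g (comp E' s')) = comp g' s' by rewrite /g' !cA.
  by rewrite -Hsr -cA (cA r' s') Hrs cid_l.
have -> : comp (comp g (comp E' s')) (comp r' (comp R g)) =
          comp g (comp E' (comp (comp s' r') (comp R g))) by rewrite !cA.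
by rewrite Hsr /g' -!cA (cA E' R) HER (cA g R) HgR (cA g g) Hgg (cA E' R) HER (cA g R) HgR Hgg.
Qed.

End Split.

Section Split2.
Local Open Scope ring_scope.
Variables (K : fieldType) (C : KCat K).
Implicit Types X Y Z W : C.

Definition ortho n M (Xs : 'I_n -> C) (inj : forall i, Mor (Xs i) M)
  (pr : forall i, Mor M (Xs i)) :=
  (forall i, comp (pr i) (inj i) = idm (Xs i)) /\
  (forall i j, i != j -> comp (pr j) (inj i) = 0).

Definition sumE n M (Xs : 'I_n -> C) (inj : forall i, Mor (Xs i) M)
  (pr : forall i, Mor M (Xs i)) : Mor M M := \sum_i comp (inj i) (pr i).

Lemma sum_pr n M (Xs : 'I_n -> C) inj pr : @ortho n M Xs inj pr ->
  forall k, comp (pr k) (sumE inj pr) = pr k.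
Proof.
move=> [H1 H2] k; rewrite /sumE comp_sumr (bigD1 k) //= big1 ?addr0.
  by rewrite cA H1 cid_l.
by move=> i Hik; rewrite cA H2 ?comp0l.
Qed.

Lemma sum_inj n M (Xs : 'I_n -> C) inj pr : @ortho n M Xs inj pr ->
  forall k, comp (sumE inj pr) (inj k) = inj k.
Proof.
move=> [H1 H2] k; rewrite /sumE comp_suml (bigD1 k) //= big1 ?addr0.
  by rewrite -cA H1 cid_r.
by move=> i Hik; rewrite -cA H2 ?comp0r // eq_sym.
Qed.

Lemma sum_idem n M (Xs : 'I_n -> C) inj pr : @ortho n M Xs inj pr ->
  comp (sumE inj pr) (sumE inj pr) = sumE inj pr.
Proof.
move=> Ho; rewrite {1}/sumE comp_suml; apply: eq_bigr => i _.
by rewrite -cA sum_pr.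
Qed.

Lemma widen_neq n (i : 'I_n) : widen_ord (leqnSn n) i != ord_max.
Proof.
apply/eqP => /(congr1 val) /= H; by move: (ltn_ord i); rewrite H ltnn.
Qed.

Lemma ortho_restr n M (Xs : 'I_n.+1 -> C) inj pr : @ortho n.+1 M Xs inj pr ->
  @ortho n M (fun i => Xs (widen_ord (leqnSn n) i))
    (fun i => inj (widen_ord (leqnSn n) i)) (fun i => pr (widen_ord (leqnSn n) i)).
Proof.
move=> [H1 H2]; split=> // i j Hij; apply: H2.
apply: contra Hij => /eqP /(congr1 val) /= H; apply/eqP; exact: val_inj.
Qed.

Lemma sumE_rec n M (Xs : 'I_n.+1 -> C) inj pr :
  @sumE n.+1 M Xs inj pr =
  sumE (fun i => inj (widen_ord (leqnSn n) i)) (fun i => pr (widen_ord (leqnSn n) i))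
  + comp (inj ord_max) (pr ord_max).
Proof. by rewrite /sumE big_ord_recr. Qed.

Lemma split_sub (Hadd : Defs.additive C) n M (Xs : 'I_n -> C) inj pr :
  @ortho n M Xs inj pr -> (forall i, local_end (Xs i)) ->
  forall e, comp e e = e -> comp e (sumE inj pr) = e -> comp (sumE inj pr) e = e ->
  splits e.
Proof.
elim: n Xs inj pr => [|n IH] Xs inj pr Ho Hloc e Hee HeE HEe.
  have He : e = 0 by rewrite -HeE /sumE big_ord0 comp0r.
  have [Z HZ] := Hadd.1.
  exists Z, 0, 0; split; first by rewrite comp0l HZ.
  by rewrite comp0l He.
set E := sumE inj pr in HeE HEe.
set E' := sumE (fun i => inj (widen_ord (leqnSn n) i)) (fun i => pr (widen_ord (leqnSn n) i)).
have Ho' := ortho_restr Ho.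
have HE : E = E' + comp (inj ord_max) (pr ord_max) by rewrite /E sumE_rec.
have HE'E' : comp E' E' = E' by apply: sum_idem.
have HEE : comp E E = E by apply: sum_idem.
have HpE : comp (pr ord_max) E = pr ord_max by apply: sum_pr.
have IH' : forall g', comp g' g' = g' -> comp g' E' = g' -> comp E' g' = g' -> splits g'.
  move=> g' H1 H2 H3; apply: (IH _ _ _ Ho') => // i; exact: Hloc.
set i0 := inj ord_max; set p0 := pr ord_max.
have Hpi : comp p0 i0 = idm _ by rewrite /p0 /i0 Ho.1.
case: (Hloc ord_max) => _ /(_ (comp p0 (comp e i0))) [[a' [Ha1 Ha2]]|[a' [Ha1 Ha2]]].
-
  set i1 := comp e i0 in Ha1 Ha2 *.
  have Hei1 : comp e i1 = i1 by rewrite /i1 cA Hee.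
  have HEi1 : comp E i1 = i1 by rewrite /i1 cA HEe.
  clearbody i1.
  set e1 := comp i1 (comp a' (comp p0 e)).
  have Hpei1 : comp p0 (comp e i1) = comp p0 i1 by rewrite Hei1.
  have He1e1 : comp e1 e1 = e1.
    by rewrite /e1 -!cA (cA e i1) Hei1 (cA p0 i1) (cA a') Ha1 cid_l.
  have Hee1 : comp e e1 = e1 by rewrite /e1 cA Hei1.
  have He1e : comp e1 e = e1 by rewrite /e1 -!cA Hee.
  have HEe1 : comp E e1 = e1 by rewrite /e1 cA HEi1.
  have He1E : comp e1 E = e1 by rewrite /e1 -!cA HeE.
  set g := e - e1.
  have Hgg : comp g g = g.
    by rewrite /g compDl !compDr !compNl !compNr Hee Hee1 He1e He1e1 subrr addr0.
  have HgE : comp g E = g by rewrite /g compDl compNl HeE He1E.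
  have HEg : comp E g = g by rewrite /g compDr compNr HEe HEe1.
  have Hgi1 : comp g i1 = 0.
    by rewrite /g compDl compNl /e1 -!cA !Hei1 Ha1 cid_r subrr.
  have [Q2 [r2 [s2 [Hrs2 Hsr2]]]] :=
    split_step HE HE'E' HEi1 Ha2 Hgg HgE Hgi1 IH'.
  have [B [j1 [j2 [q1 [q2 [Hb1 Hb2 Hb3 Hb4 Hb5]]]]]] := Hadd.2 (Xs ord_max) Q2.
  set p1 := comp a' (comp p0 e).
  have Hp1i1 : comp p1 i1 = idm _ by rewrite /p1 -!cA Hpei1.
  have Hs2 : s2 = comp g s2 by rewrite -Hsr2 -cA Hrs2 cid_r.
  have Hr2 : r2 = comp r2 g by rewrite -Hsr2 cA Hrs2 cid_l.
  have Hp1g : comp p1 g = 0.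
    by rewrite /g compDr compNr /p1 /e1 -!cA Hee (cA e i1) Hei1 (cA p0 i1) (cA a' (comp p0 i1)) Ha1 cid_l subrr.
  have Hp1s2 : comp p1 s2 = 0 by rewrite Hs2 cA Hp1g comp0l.
  have Hr2i1 : comp r2 i1 = 0 by rewrite Hr2 -cA Hgi1 comp0r.
  have He1p : e1 = comp i1 p1 by [].
  clearbody p1.
  exists B, (comp j1 p1 + comp j2 r2), (comp i1 q1 + comp s2 q2); split.
    rewrite !compDl !compDr -!cA (cA p1 i1) Hp1i1 cid_l (cA p1) Hp1s2 comp0l comp0r.
    by rewrite (cA r2) Hr2i1 comp0l comp0r (cA r2 s2) Hrs2 cid_l addr0 add0r.
  rewrite !compDl !compDr -!cA (cA q1 j1) Hb1 cid_l (cA q1 j2) Hb4 comp0l comp0r.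
  rewrite (cA q2 j1) Hb3 comp0l comp0r (cA q2 j2) Hb2 cid_l addr0 add0r Hsr2.
  by rewrite /g He1p subrKC.
-
  set i1 := comp (E - e) i0.
  have Hpi1 : comp p0 i1 = idm _ - comp p0 (comp e i0).
    by rewrite /i1 cA compDr compNr HpE compDl compNl -cA Hpi.
  have HEi1 : comp E i1 = i1.
    by rewrite /i1 cA compDr compNr HEE HEe.
  have Hei1 : comp e i1 = 0.
    by rewrite /i1 cA compDr compNr HeE Hee subrr comp0l.
  have Ha : comp (comp p0 i1) a' = idm _ by rewrite Hpi1.
  exact: split_step HE HE'E' HEi1 Ha Hee HeE Hei1 IH'.
Qed.

Lemma splitting (Hadd : Defs.additive C) (HKS : krull_schmidt C) X (e : Mor X X) :
  comp e e = e -> splits e.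
Proof.
move=> Hee; have [n [Xs [inj [pr [H1 H2 H3 H4]]]]] := HKS X.
have Ho : ortho inj pr by split.
apply: (split_sub Hadd Ho H4 Hee); rewrite /sumE H3; [exact: cid_r | exact: cid_l].
Qed.

End Split2.

Section Dim.
Local Open Scope ring_scope.
Variables (K : fieldType) (C : KCat K).
Variables (Q M : C) (s : Mor Q M) (r : Mor M Q).

Definition conjm (a : Mor Q Q) : Mor M M := comp s (comp a r).
Lemma conjm_lin : linear conjm.
Proof. by move=> a x y; rewrite /conjm comp_linl comp_linr. Qed.
HB.instance Definition _ := GRing.isLinear.Build K (Mor Q Q) (Mor M M) _ conjm conjm_lin.

Lemma dim_lt : comp r s = idm Q -> comp s r <> idm M ->
  (\dim (fullv : {vspace Mor Q Q}) < \dim (fullv : {vspace Mor M M}))%N.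
Proof.
move=> Hrs Hsr.
pose phi := linfun conjm.
have Hphi : forall a, phi a = comp s (comp a r) by move=> a; rewrite lfunE.
have Hinj : lker phi == 0%VS.
  apply/lker0P => a b; rewrite !Hphi => H.
  have := congr1 (fun x => comp r (comp x s)) H => /=.
  by rewrite -!cA !(cA r s) !Hrs !cid_l !cid_r.
have Hd : \dim (phi @: fullv) = \dim (fullv : {vspace Mor Q Q}).
  by apply: limg_dim_eq; rewrite (eqP Hinj) capv0.
rewrite ltnNge; apply/negP => Hle.
have /eqP Heq : (phi @: fullv == fullv)%VS by rewrite eqEdim subvf Hd.
have : idm M \in (phi @: fullv)%VS by rewrite Heq memvf.
case/memv_imgP => a _; rewrite Hphi => Ha; apply: Hsr.
by rewrite -(cid_r (comp s r)) Ha -!cA (cA r s) Hrs cid_l.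
Qed.

End Dim.

Section MinApprox.
Local Open Scope ring_scope.
Variables (K : fieldType) (C : KCat K).
Hypothesis (Hadd : Defs.additive C) (HKS : krull_schmidt C).

Lemma min_left (A : mor_class C)
  (HA : forall X M M' (f : Mor X M) (h : Mor M M'), A X M f -> A X M' (comp h f))
  X M (f : Mor X M) : left_approx A f -> exists M' (f' : Mor X M'), source_map A f'.
Proof.
move: {2}(\dim (fullv : {vspace Mor M M})) (leqnn (\dim (fullv : {vspace Mor M M}))) => d.
elim: d M f => [|d IH] M f Hd Hf.
  case: (classic (left_minimal f)) => Hm; first by exists M, f.
  exfalso; apply: Hm => g Hg; apply: NNPP => Hi.
  have [e [Hee Hef Hne]] := fitting_idem Hi Hg.
  have [Q [r [s [Hrs Hsr]]]] := splitting Hadd HKS Hee.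
  have := dim_lt Hrs; rewrite Hsr => /(_ Hne).
  by rewrite leqn0 in Hd; rewrite (eqP Hd).
case: (classic (left_minimal f)) => Hm; first by exists M, f.
have [g [Hg Hi]] : exists g : Mor M M, comp g f = f /\ ~ iso g.
  apply: NNPP => H; apply: Hm => g Hg; apply: NNPP => Hi; apply: H; by exists g.
have [e [Hee Hef Hne]] := fitting_idem Hi Hg.
have [Q [r [s [Hrs Hsr]]]] := splitting Hadd HKS Hee.
have Hlt := dim_lt Hrs; rewrite Hsr in Hlt; have {Hlt}Hlt := Hlt Hne.
apply: (IH Q (comp r f)); first by rewrite -ltnS (leq_trans Hlt).
split; first exact: HA Hf.1.
move=> X' j Hj; have [h ->] := Hf.2 X' j Hj.
by exists (comp h s); rewrite -{1}Hef -Hsr -!cA.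
Qed.

End MinApprox.

Section Op.
Local Open Scope ring_scope.
Variables (K : fieldType) (C : KCat K).

Definition opC : KCat K :=
  @Build_KCat K C (fun X Y => Mor Y X) (fun X => idm X)
    (fun X Y Z g f => comp f g)
    (fun X Y Z W h g f => esym (compA f g h))
    (fun X Y f => comp_id_r f) (fun X Y f => comp_id_l f)
    (fun X Y Z f a g1 g2 => comp_linr f a g1 g2)
    (fun X Y Z g a f1 f2 => comp_linl g a f1 f2).

Definition opA (A : mor_class C) : mor_class opC := fun X Y f => A Y X f.

Lemma iso_op (X Y : C) (f : @Mor K C X Y) : @iso K opC Y X f <-> iso f.
Proof. by split=> [[g [H1 H2]]|[g [H1 H2]]]; exists g. Qed.

Lemma local_op (X : C) : @local_end K opC X <-> local_end X.
Proof.
split=> [[H1 H2]|[H1 H2]]; split=> // a.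
  by case: (H2 a) => /iso_op; [left|right].
by case: (H2 a) => /iso_op; [left|right].
Qed.

Lemma ks_op : krull_schmidt C -> krull_schmidt opC.
Proof.
move=> H X; have [n [Xs [inj [pr [H1 H2 H3 H4]]]]] := H X.
exists n, Xs, pr, inj; split=> //.
  by move=> i j Hij; apply: H2; rewrite eq_sym.
move=> i; exact: (proj2 (local_op (Xs i)) (H4 i)).
Qed.

Lemma add_op : Defs.additive C -> Defs.additive opC.
Proof.
move=> [[Z HZ] H]; split; first by exists Z.
move=> A B; have [S [i1 [i2 [p1 [p2 [Hb1 Hb2 Hb3 Hb4 Hb5]]]]]] := H A B.
exists S, p1, p2, i1, i2; split=> //.
Qed.

End Op.

Section MinRight.
Local Open Scope ring_scope.
Variables (K : fieldType) (C : KCat K).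
Hypothesis (Hadd : Defs.additive C) (HKS : krull_schmidt C).

Lemma min_right (A : mor_class C)
  (HA : forall X M M' (f : Mor M X) (h : Mor M' M), A M X f -> A M' X (comp f h))
  X M (f : Mor M X) : right_approx A f -> exists M' (f' : Mor M' X), sink_map A f'.
Proof.
move=> Hf.
have := @min_left K (opC C) (add_op Hadd) (ks_op HKS) (opA A) _ X M f Hf.
case=> [X0 M0 M' f0 h H|M' [f' [H1 H2]]]; first exact: HA.
exists M', f'; split=> // g Hg; apply/iso_op; exact: H2.
Qed.

End MinRight.

Section Local.
Local Open Scope ring_scope.
Variables (K : fieldType) (C : KCat K).
Implicit Types X Y Z W : C.

Lemma iso_conj A X (i : Mor A X) (p : Mor X A) (b : Mor A A) :
  comp p i = idm A -> comp i p = idm X -> iso b -> iso (comp i (comp b p)).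
Proof.
move=> Hpi Hip [b' [H1 H2]]; exists (comp i (comp b' p)); split.
  by rewrite -!cA (cA p i) Hpi cid_l (cA b' b) H1 cid_l Hip.
by rewrite -!cA (cA p i) Hpi cid_l (cA b b') H2 cid_l Hip.
Qed.

Lemma local_transfer A X (i : Mor A X) (p : Mor X A) :
  comp p i = idm A -> comp i p = idm X -> local_end A -> local_end X.
Proof.
move=> Hpi Hip [Hne H]; split.
  apply: contra Hne => /eqP H0; apply/eqP.
  by rewrite -Hpi -(cid_l i) H0 comp0l comp0r.
move=> a.
have Ha : a = comp i (comp (comp p (comp a i)) p).
  by rewrite -!cA (cA i p) Hip cid_l cid_r.
have Ha' : idm X - a = comp i (comp (idm A - comp p (comp a i)) p).
  by rewrite compDl compNl compDr compNr cid_l Hip -Ha.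
case: (H (comp p (comp a i))) => Hb; [left|right].
  by rewrite Ha; apply: iso_conj Hpi Hip _.
by rewrite Ha'; apply: iso_conj Hpi Hip _.
Qed.

Lemma idem_iso X (e : Mor X X) : comp e e = e -> iso e -> e = idm X.
Proof.
move=> Hee [g [H1 H2]]; by rewrite -H1 -{2}Hee cA H1 cid_l.
Qed.

Lemma local_indec X : local_end X -> indecomposable X.
Proof.
move=> [Hne H]; split; first by move=> HZ; rewrite /is_zero in HZ; rewrite HZ eqxx in Hne.
move=> A B i1 i2 p1 p2 [Hb1 Hb2 Hb3 Hb4 Hb5].
have Hee : comp (comp i1 p1) (comp i1 p1) = comp i1 p1 by rewrite -cA (cA p1) Hb1 cid_l.
case: (H (comp i1 p1)) => Hi.
  right; rewrite /is_zero -Hb2 -(cid_l i2) -(idem_iso Hee Hi).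
  by rewrite cA (cA p2) Hb3 !comp0l.
have He' : comp (idm X - comp i1 p1) (idm X - comp i1 p1) = idm X - comp i1 p1.
  by rewrite compDl !compDr !compNl !compNr !cid_l !cid_r Hee subrr addr0.
have H0 : comp i1 p1 = 0.
  have : idm X - (idm X - comp i1 p1) = comp i1 p1 by rewrite opprB addrCA subrr addr0.
  by rewrite (idem_iso He' Hi) subrr.
left; rewrite /is_zero -Hb1 -{1}(cid_l (comp p1 i1)) -{1}Hb1 -cA (cA i1 p1) H0.
by rewrite comp0l comp0r.
Qed.

Lemma indec_local (Hadd : Defs.additive C) (HKS : krull_schmidt C) X :
  indecomposable X -> local_end X.
Proof.
move=> [Hnz Hind]; have [n [Xs [inj [pr [H1 H2 H3 H4]]]]] := HKS X.
case: n Xs inj pr H1 H2 H3 H4 => [|n] Xs inj pr H1 H2 H3 H4.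
  by exfalso; apply: Hnz; rewrite /is_zero -H3 big_ord0.
set i := inj ord0; set p := pr ord0.
have Hpi : comp p i = idm _ by apply: H1.
set e := idm X - comp i p.
have Hee : comp e e = e.
  rewrite /e compDl !compDr !compNl !compNr !cid_l !cid_r -cA (cA p i) Hpi cid_l.
  by rewrite subrr addr0.
have [Q [r [s [Hrs Hsr]]]] := splitting Hadd HKS Hee.
have Hr : r = comp r e by rewrite -Hsr cA Hrs cid_l.
have Hs : s = comp e s by rewrite -Hsr -cA Hrs cid_r.
have Hei : comp e i = 0.
  by rewrite /e compDl compNl cid_l -cA Hpi cid_r subrr.
have Hpe : comp p e = 0.
  by rewrite /e compDr compNr cid_r cA Hpi cid_l subrr.
have Hb : is_biproduct i s p r.
  split=> //.
  - by rewrite Hr -cA Hei comp0r.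
  - by rewrite Hs cA Hpe comp0l.
  - by rewrite Hsr /e addrC subrK.
case: (Hind _ _ _ _ _ _ Hb) => HZ.
  by case: (H4 ord0) => Hne _; rewrite /is_zero in HZ; rewrite HZ eqxx in Hne.
have He0 : e = 0 by rewrite -Hsr -(cid_r s) HZ comp0r comp0l.
have Hip : comp i p = idm X.
  by apply/eqP; rewrite eq_sym -subr_eq0 -/e He0.
exact: local_transfer Hpi Hip (H4 ord0).
Qed.

End Local.

Section Tri.
Local Open Scope ring_scope.
Variables (K : fieldType) (C : KCat K) (T : Triangulated C).
Hypothesis Hadd : Defs.additive C.
Implicit Types X Y Z W : C.

Lemma shm0 X Y : shm T (0 : Mor X Y) = 0.
Proof.
have := shm_lin T 1 (0 : Mor X Y) 0; rewrite !scale1r addr0 => H.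
by apply: (addrI (shm T (0 : Mor X Y))); rewrite addr0 -H.
Qed.
Lemma shmD X Y (f g : Mor X Y) : shm T (f + g) = shm T f + shm T g.
Proof. by have := shm_lin T 1 f g; rewrite !scale1r. Qed.
Lemma shmZ X Y a (f : Mor X Y) : shm T (a *: f) = a *: shm T f.
Proof. by have := shm_lin T a f 0; rewrite !addr0 shm0 addr0. Qed.
Lemma shmN X Y (f : Mor X Y) : shm T (- f) = - shm T f.
Proof. by rewrite -scaleN1r shmZ scaleN1r. Qed.
Lemma shmB X Y (f g : Mor X Y) : shm T (f - g) = shm T f - shm T g.
Proof. by rewrite shmD shmN. Qed.

Lemma iso_shm X Y (f : Mor X Y) : iso f -> iso (shm T f).
Proof.
move=> [g [H1 H2]]; exists (shm T g); by rewrite -!shm_comp H1 H2 !shm_id.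
Qed.

Lemma iso_shm_inv X Y (f : Mor X Y) : iso (shm T f) -> iso f.
Proof.
move=> [g' [H1 H2]]; have [g Hg] := shm_surj g'; subst g'.
exists g; split; apply: (shm_inj (t := T) (f := _)); by rewrite shm_comp shm_id.
Qed.

Lemma local_sh X : local_end X -> local_end (sh T X).
Proof.
move=> [Hne H]; split.
  apply: contra Hne => /eqP H0; apply/eqP; apply: (shm_inj (t := T) (f := _)).
  by rewrite shm_id H0 shm0.
move=> a; have [a0 <-] := shm_surj a.
case: (H a0) => Hi; [left|right]; first exact: iso_shm.
by rewrite -shm_id -shmB; apply: iso_shm.
Qed.

Lemma local_sh_inv X : local_end (sh T X) -> local_end X.
Proof.
move=> [Hne H]; split.
  by apply: contra Hne => /eqP H0; apply/eqP; rewrite -shm_id H0 shm0.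
move=> a; case: (H (shm T a)) => Hi; [left|right]; first exact: iso_shm_inv.
by apply: iso_shm_inv; rewrite shmB shm_id.
Qed.

Lemma zero_sh Z : is_zero Z -> is_zero (sh T Z).
Proof. by move=> HZ; rewrite /is_zero -shm_id HZ shm0. Qed.

Lemma zero_tri W : exists Z (HZ : is_zero Z),
  dist T (0 : Mor Z W) (idm W) (0 : Mor W (sh T Z)).
Proof.
have [Z HZ] := Hadd.1; exists Z, HZ.
apply/dist_rot; rewrite shm0 oppr0; apply: dist_idm; exact: zero_sh.
Qed.

Lemma comp12 X Y Z (f : Mor X Y) (g : Mor Y Z) (h : Mor Z (sh T X)) :
  dist T f g h -> comp g f = 0.
Proof.
move=> Hd; have [Z0 HZ0] := Hadd.1.
have [c [Hc _]] := dist_morph (dist_idm T X HZ0) Hd (b := f) (a := idm X) erefl.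
by rewrite -Hc comp0r.
Qed.

Lemma comp23 X Y Z (f : Mor X Y) (g : Mor Y Z) (h : Mor Z (sh T X)) :
  dist T f g h -> comp h g = 0.
Proof. by move=> /dist_rot /comp12. Qed.

Lemma comp31 X Y Z (f : Mor X Y) (g : Mor Y Z) (h : Mor Z (sh T X)) :
  dist T f g h -> comp (shm T f) h = 0.
Proof.
move=> /dist_rot /dist_rot /comp12; rewrite compNl => /eqP; rewrite oppr_eq0 => /eqP //.
Qed.

Lemma factor_cok X Y Z W (f : Mor X Y) (g : Mor Y Z) (h : Mor Z (sh T X))
  (phi : Mor Y W) : dist T f g h -> comp phi f = 0 -> exists c, phi = comp c g.
Proof.
move=> Hd Hphi; have [Z0 [HZ0 Hd0]] := zero_tri W.
have [c [Hc _]] := dist_morph Hd Hd0 (b := phi) (a := 0 : Mor X Z0)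
  (etrans Hphi (esym (comp0r _ _))).
by exists c; rewrite Hc cid_l.
Qed.

Lemma factor_ker X Y Z W (f : Mor X Y) (g : Mor Y Z) (h : Mor Z (sh T X))
  (phi : Mor W Y) : dist T f g h -> comp g phi = 0 -> exists a, phi = comp f a.
Proof.
move=> Hd Hphi; have [Z0 HZ0] := Hadd.1.
have Hd0 := dist_idm T W HZ0; move/dist_rot: Hd0 => Hd0.
move/dist_rot: Hd => Hd.
have [c [_ Hc]] := dist_morph Hd0 Hd (a := phi) (b := 0 : Mor Z0 Z)
  (etrans (comp0l _ _) (esym Hphi)).
have [a Ha] := shm_surj c; exists a; apply: (shm_inj (t := T) (f := _)).
move: Hc; rewrite shm_id compNr cid_r compNl -Ha -shm_comp => /eqP.
by rewrite eqr_opp => /eqP.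
Qed.

Lemma ext3 Y Z (w : Mor Y (sh T Z)) : exists N (u : Mor Z N) (v : Mor N Y), dist T u v w.
Proof.
have [Q [x [y Hd]]] := dist_ext T w.
have [N [be Hbe]] := sh_esurj T Q.
have [be' [Hb1 Hb2]] := Hbe.
have Hd' : dist T w (comp be' x) (comp y be).
  apply: (dist_iso Hd (a := idm Y) (b := idm (sh T Z)) (c := be')); rewrite ?cid_l ?cid_r //.
  - exact: iso_idm.
  - exact: iso_idm.
  - by exists be.
  - by rewrite shm_id cid_l -cA Hb2 cid_r.
have [u Hu] := shm_surj (comp be' x).
have [v Hv] := shm_surj (comp y be).
exists N, (- u), (- v).
apply/dist_rot/dist_rot; rewrite !shmN !opprK Hu Hv; exact: Hd'.
Qed.

End Tri.

Section Ideal.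
Local Open Scope ring_scope.
Variables (K : fieldType) (C : KCat K) (T : Triangulated C).
Local Unset Implicit Arguments.
Variables (I : mor_class C) (HI : is_ideal I).
Local Set Implicit Arguments.
Implicit Types X Y Z W : C.

Lemma I_post X Y Z (g : Mor X Y) (h : Mor Y Z) : I X Y g -> I X Z (comp h g).
Proof. by case: HI => _ _ Hc Hg; have := Hc _ _ _ _ (idm X) g h Hg; rewrite cid_r. Qed.
Lemma I_pre W X Y (g : Mor X Y) (f : Mor W X) : I X Y g -> I W Y (comp g f).
Proof. by case: HI => _ _ Hc Hg; have := Hc _ _ _ _ f g (idm Y) Hg; rewrite cid_l. Qed.
Lemma I_0 X Y : I X Y 0.
Proof. by case: HI. Qed.

Lemma Gh_post X Y Z (f : Mor X Y) (h : Mor Y Z) : Gh I f -> Gh I (comp h f).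
Proof. by move=> Hf W i Hi; rewrite -cA Hf // comp0r. Qed.
Lemma Gh_pre W X Y (f : Mor X Y) (h : Mor W X) : Gh I f -> Gh I (comp f h).
Proof. by move=> Hf V i Hi; rewrite -cA Hf //; apply: I_post. Qed.
Lemma Gh_0 X Y : Gh I (0 : Mor X Y).
Proof. by move=> W i _; rewrite comp0l. Qed.
Lemma Gh_ObI X Y (f : Mor X Y) : ObI I X -> Gh I f -> f = 0.
Proof. by move=> HX Hf; rewrite -(cid_r f); apply: Hf. Qed.

Lemma SI_in Z Y (j : Mor Z Y) : I Z Y j -> shift_ideal T I (shm T j).
Proof.
move=> Hj; exists Z, Y, (idm _), (idm _), j; split=> //; try exact: iso_idm.
by rewrite cid_l cid_r.
Qed.

Lemma SI_from Z W (i : Mor (sh T Z) W) : shift_ideal T I i ->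
  exists Y' (b : Mor (sh T Y') W) (j : Mor Z Y'), I Z Y' j /\ i = comp b (shm T j).
Proof.
move=> [X' [Y' [a [b [f [Ha Hb Hf ->]]]]]].
have [a0 <-] := shm_surj a.
exists Y', b, (comp f a0); split; first exact: I_pre.
by rewrite shm_comp.
Qed.

End Ideal.

Section Forward.
Local Open Scope ring_scope.
Variables (K : fieldType) (C : KCat K) (T : Triangulated C).
Hypothesis (Hadd : Defs.additive C) (HKS : krull_schmidt C).
Local Unset Implicit Arguments.
Variables (I : mor_class C) (HI : is_ideal I).
Local Set Implicit Arguments.
Implicit Types X Y Z W : C.
Hypothesis HAR : AR_ideal T I.

Lemma fw_Gh_CG X Y (phi : Mor X Y) : Gh I phi -> CoGh (shift_ideal T I) phi.
Proof.
move=> Hphi W i Hi.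
case: HAR => _ _ TY.
have [Z [N [u [v [w [Hd Hu Hv]]]]]] := TY X.
move: Hi => [X' [Y' [a [b [f [Ha Hb Hf ->]]]]]].
have Hd1 := proj1 (dist_rot _ _ _) Hd.
have [c Hc] : exists c, comp a phi = comp c w.
  apply: (factor_cok Hadd Hd1); rewrite -cA Hphi ?comp0r //; exact: Hv.1.
have [c0 Hc0] := shm_surj c.
have [d Hd'] := Hu.2 _ (comp f c0) (I_pre HI c0 Hf).
rewrite -!cA Hc -Hc0 (cA (shm T f)) -shm_comp Hd' shm_comp -cA (comp31 Hadd Hd).
by rewrite !comp0r.
Qed.

Lemma fw_CG_Gh X Y (phi : Mor X Y) : CoGh (shift_ideal T I) phi -> Gh I phi.
Proof.
move=> Hphi W i Hi.
case: HAR => _ TX _.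
have [B0 [al [al' [Hal1 Hal2]]]] : exists B0 (al : Mor (sh T B0) Y) (al' : Mor Y (sh T B0)),
  comp al' al = idm _ /\ comp al al' = idm _.
  have [B0 [al [al' [H1 H2]]]] := sh_esurj T Y; by exists B0, al, al'.
have [M [Y0 [f [g [h [Hd Hf Hg]]]]]] := TX B0.
have HSI : shift_ideal T I (comp (shm T f) al').
  exists B0, M, al', (idm _), f; split; try exact: iso_idm.
  - by exists al.
  - exact: Hf.1.
  - by rewrite cid_l.
have H0 := Hphi _ _ HSI.
have Hd1 := proj1 (dist_rot _ _ _) (proj1 (dist_rot _ _ _) Hd).
have [c Hc] : exists c, comp al' phi = comp h c.
  apply: (factor_ker Hadd Hd1); rewrite -cA in H0; by rewrite compNl H0 oppr0.
have [d Hdd] := Hg.2 _ (comp c i) (I_post HI c Hi).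
rewrite -(cid_l (comp phi i)) -Hal2 -cA (cA al') Hc -cA Hdd (cA h) (comp23 Hadd Hd).
by rewrite !comp0l comp0r.
Qed.

Lemma fw_2a X : indecomposable X -> ~ ObI I X ->
  forall M (f : Mor X M), source_map (Gh I) f -> sink_map (Gh I) f.
Proof.
move=> Hind HnI M f [[Hf Hfa] Hfm].
case: HAR => _ _ TY; have [Z [N [u [v [w [Hd Hu Hv]]]]]] := TY X.
have Hd1 := proj1 (dist_rot _ _ _) Hd.
have HwGh : Gh I w.
  by move=> W i Hi; have [d ->] := Hv.2 _ i Hi; rewrite cA (comp23 Hadd Hd) comp0l.
have Hwl : forall W (phi : Mor X W), Gh I phi -> exists c, phi = comp c w.
  move=> W phi Hphi; apply: (factor_cok Hadd Hd1); exact: Hphi _ v Hv.1.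
have Hwr : forall W (psi : Mor W (sh T Z)), Gh I psi -> exists c, psi = comp w c.
  move=> W psi Hpsi; apply: (factor_ker Hadd (proj1 (dist_rot _ _ _) Hd1)).
  by rewrite compNl (fw_Gh_CG Hpsi (SI_in T Hu.1)) oppr0.
have [k Hk] := Hfa _ w HwGh.
have [l Hl] := Hwl _ f Hf.
have Hlk : comp (comp l k) f = f by rewrite -cA -Hk -Hl.
have [m [Hm1 Hm2]] := Hfm _ Hlk.
have Hmf : comp m f = f by rewrite -{1}Hlk cA Hm1 cid_l.
split; [split=> // W psi Hpsi|].
  have [c Hc] := Hwr _ (comp k psi) (Gh_post k Hpsi).
  exists c; rewrite -(cid_l psi) -Hm1 -!cA Hc (cA l w) -Hl (cA m f) Hmf //.
move=> g Hg.
have [_ /(_ g) [//|[n [Hn1 Hn2]]]] := indec_local Hadd HKS Hind.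
exfalso.
have H1g : comp f (idm X - g) = 0 by rewrite compDr compNr cid_r Hg subrr.
have Hf0 : f = 0 by rewrite -(cid_r f) -Hn2 cA H1g comp0l.
have Hw0 : w = 0 by rewrite Hk Hf0 comp0r.
have [a Ha] := factor_ker Hadd Hd1 (phi := idm X) (etrans (cid_r w) Hw0).
apply: HnI; rewrite /ObI Ha. exact: (@I_pre _ _ I HI X N X v a (proj1 Hv)).
Qed.

Lemma fw_2b X : indecomposable X -> ~ ObI I X ->
  forall N (g : Mor N (sh T X)), sink_map (Gh I) g -> source_map (Gh I) g.
Proof.
move=> Hind HnI N g [[Hg Hga] Hgm].
case: HAR => _ TX _; have [M [Y0 [f [g0 [h [Hd Hf Hg0]]]]]] := TX X.
have Hd1 := proj1 (dist_rot _ _ _) Hd.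
have Hd2 := proj1 (dist_rot _ _ _) Hd1.
have HhGh : Gh I h.
  by move=> W i Hi; have [d ->] := Hg0.2 _ i Hi; rewrite cA (comp23 Hadd Hd) comp0l.
have Hhl : forall W (phi : Mor Y0 W), Gh I phi -> exists c, phi = comp c h.
  move=> W phi Hphi; apply: (factor_cok Hadd Hd1); exact: Hphi _ g0 Hg0.1.
have Hhr : forall W (psi : Mor W (sh T X)), Gh I psi -> exists c, psi = comp h c.
  move=> W psi Hpsi; apply: (factor_ker Hadd Hd2).
  by rewrite compNl (fw_Gh_CG Hpsi (SI_in T Hf.1)) oppr0.
have [a Ha] := Hhr _ g Hg.
have [b Hb] := Hga _ h HhGh.
have Hba : comp g (comp b a) = g by rewrite cA -Hb -Ha.
have [m [Hm1 Hm2]] := Hgm _ Hba.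
split; [split=> // W psi Hpsi|].
  have [c Hc] := Hhl _ (comp psi (comp m b)) (Gh_pre HI (comp m b) Hpsi).
  exists c; rewrite -(cid_r psi) -Hm1.
  have -> : comp psi (comp m (comp b a)) = comp (comp psi (comp m b)) a by rewrite !cA.
  by rewrite Hc -cA -Ha.
move=> k Hk.
have [_ /(_ k) [//|[n [Hn1 Hn2]]]] := local_sh T (indec_local Hadd HKS Hind).
exfalso.
have H1k : comp (idm _ - k) g = 0 by rewrite compDl compNl cid_l Hk subrr.
have Hg' : g = 0 by rewrite -(cid_l g) -Hn1 -cA H1k comp0r.
have Hh0 : h = 0 by rewrite Hb Hg' comp0l.
have [c Hc] := factor_cok Hadd Hd2 (phi := idm (sh T X)) (etrans (cid_l h) Hh0).
have [c0 Hc0] := shm_surj c.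
have Hid : idm X = comp (- c0) f.
  apply: (shm_inj (t := T) (f := _)); rewrite shm_id Hc -Hc0 compNr -shm_comp -shmN.
  by rewrite compNl.
by apply: HnI; rewrite /ObI Hid; exact: (@I_post _ _ I HI X M X f (- c0) (proj1 Hf)).
Qed.

End Forward.

Section Backward.
Local Open Scope ring_scope.
Variables (K : fieldType) (C : KCat K) (T : Triangulated C).
Hypothesis (Hadd : Defs.additive C) (HKS : krull_schmidt C).
Local Unset Implicit Arguments.
Variables (I : mor_class C) (HI : is_ideal I).
Local Set Implicit Arguments.
Hypothesis (Hff : functorially_finite I).
Hypothesis H1 : forall (X Y : C) (f : Mor X Y), Gh I f <-> CoGh (shift_ideal T I) f.
Implicit Types X Y Z W : C.

Lemma tri_left Y N' Q (v' : Mor N' Y) (w0 : Mor Y Q) (x0 : Mor Q (sh T N')) :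
  right_approx I v' -> dist T v' w0 x0 -> left_approx (Gh I) w0.
Proof.
move=> Hv Hd; split.
  by move=> W i Hi; have [d ->] := Hv.2 _ i Hi; rewrite cA (comp12 Hadd Hd) comp0l.
move=> W phi Hphi; apply: (factor_cok Hadd Hd); exact: Hphi _ v' Hv.1.
Qed.

Lemma tri_right Z N Q (u : Mor Z N) (k : Mor N Q) (r : Mor Q (sh T Z)) :
  left_approx I u -> dist T u k r -> right_approx (Gh I) r.
Proof.
move=> Hu Hd; split.
  apply/H1 => W i Hi.
  have [Y' [b [j [Hj ->]]]] := SI_from HI Hi.
  have [d ->] := Hu.2 _ j Hj.
  by rewrite shm_comp -!cA (comp31 Hadd Hd) !comp0r.
move=> W psi Hpsi.
have Hd2 := proj1 (dist_rot _ _ _) (proj1 (dist_rot _ _ _) Hd).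
apply: (factor_ker Hadd Hd2).
by rewrite compNl (proj1 (H1 _) Hpsi _ _ (SI_in T Hu.1)) oppr0.
Qed.

Lemma AR_of_bi Y Z (w : Mor Y (sh T Z)) :
  left_approx (Gh I) w -> right_approx (Gh I) w ->
  exists N (u : Mor Z N) (v : Mor N Y), [/\ dist T u v w, left_approx I u & right_approx I v].
Proof.
move=> Hwl Hwr.
have [N [u [v Hd]]] := ext3 w.
have Hd1 := proj1 (dist_rot _ _ _) Hd.
have Hd2 := proj1 (dist_rot _ _ _) Hd1.
exists N, u, v; split=> //.
- split.
    have [N'' [u'' Hu'']] := (Hff Z).1.
    have [Q'' [k [r Hdr]]] := dist_ext T u''.
    have [Hr _] := tri_right Hu'' Hdr.
    have [x Hx] := Hwr.2 _ r Hr.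
    have Hdr2 := proj1 (dist_rot _ _ _) (proj1 (dist_rot _ _ _) Hdr).
    have [c [Hc _]] := dist_morph Hdr2 Hd2 (a := x) (b := idm _) (etrans (cid_l r) Hx).
    have [c0 Hc0] := shm_surj c.
    have -> : u = comp c0 u''.
      apply: (shm_inj (t := T) (f := _)); rewrite shm_comp Hc0.
      by move: Hc; rewrite cid_r !compNr => /eqP; rewrite eqr_opp => /eqP ->.
    exact: (@I_post _ _ I HI _ _ _ u'' c0 (proj1 Hu'')).
  move=> W j Hj.
  have H0 : comp (shm T j) w = 0 := proj1 (H1 _) Hwl.1 _ _ (SI_in T Hj).
  have [c Hc] := factor_cok Hadd Hd2 H0.
  have [c0 Hc0] := shm_surj c.
  exists (- c0); apply: (shm_inj (t := T) (f := _)).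
  by rewrite Hc -Hc0 compNr shm_comp shmN compNl.
- split.
    have [N' [v' Hv']] := (Hff Y).2.
    have [Q0 [w0 [x0 Hd0]]] := dist_ext T v'.
    have [Hw0 _] := tri_left Hv' Hd0.
    have [a Ha] := Hwl.2 _ w0 Hw0.
    have Hd02 := proj1 (dist_rot _ _ _) Hd0.
    have [c [_ Hc]] := dist_morph Hd2 Hd02 (a := idm Y) (b := a) (etrans (esym Ha) (esym (cid_r w0))).
    have [c0 Hc0] := shm_surj c.
    have -> : v = comp v' c0.
      apply: (shm_inj (t := T) (f := _)); rewrite shm_comp Hc0.
      by move: Hc; rewrite shm_id cid_l !compNl => /eqP; rewrite eqr_opp => /eqP ->.
    exact: (@I_pre _ _ I HI _ _ _ v' c0 (proj1 Hv')).
  move=> W i Hi.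
  apply: (factor_ker Hadd Hd1); exact: Hwl.1 _ i Hi.
Qed.

Lemma cext1 Y Z W (h : Mor Y Z) (g : Mor Z Y) (x : Mor W Z) :
  comp h g = idm Z -> comp h (comp g x) = x.
Proof. by move=> H; rewrite cA H cid_l. Qed.
Lemma cext0 X Y Z W (h : Mor Y Z) (g : Mor X Y) (x : Mor W X) :
  comp h g = 0 -> comp h (comp g x) = 0.
Proof. by move=> H; rewrite cA H comp0l. Qed.

Lemma bi_iso Y S S' (f : Mor Y S) (al' : Mor S S') (al : Mor S' S) :
  comp al al' = idm S -> comp al' al = idm S' ->
  left_approx (Gh I) f -> right_approx (Gh I) f ->
  left_approx (Gh I) (comp al' f) /\ right_approx (Gh I) (comp al' f).
Proof.
move=> Ha1 Ha2 [Hf Hfl] [_ Hfr]; have Hg : Gh I (comp al' f) by exact: Gh_post.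
split; split=> // W.
  move=> phi Hphi; have [c ->] := Hfl _ phi Hphi.
  by exists (comp c al); rewrite -cA (cext1 _ Ha1).
move=> psi Hpsi; have [d Hd] := Hfr _ (comp al psi) (Gh_post al Hpsi).
by exists d; rewrite -cA -Hd (cext1 _ Ha2).
Qed.

Hypothesis H2 : forall X : C, indecomposable X -> ~ ObI I X ->
      (forall (M : C) (f : Mor X M), source_map (Gh I) f -> sink_map (Gh I) f) /\
      (forall (N : C) (g : Mor N (sh T X)), sink_map (Gh I) g -> source_map (Gh I) g).

Lemma sumY A : local_end A ->
  exists S (f : Mor A S), left_approx (Gh I) f /\ right_approx (Gh I) f.
Proof.
move=> Hloc; case: (classic (ObI I A)) => HA.
  have [Z0 HZ0] := Hadd.1; exists Z0, 0; split; split; try exact: Gh_0.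
    move=> W phi Hphi; exists 0; rewrite comp0l; exact: Gh_ObI HA Hphi.
  by move=> W psi _; exists 0; rewrite comp0r; apply: is_zero_mor'.
have [N [v Hv]] := (Hff A).2.
have [Q [w0 [x0 Hd]]] := dist_ext T v.
have Hw0 := tri_left Hv Hd.
have [M' [f' Hf']] := min_left Hadd HKS (fun X M M' f h Hf => @Gh_post _ _ I X M M' f h Hf) Hw0.
have [Hs _] := H2 (local_indec Hloc) HA.
have [Hsk _] := Hs _ _ Hf'.
by exists M', f'; split=> //; case: Hf'.
Qed.

Lemma sumX B : local_end B ->
  exists Y (h : Mor Y B), left_approx (Gh I) h /\ right_approx (Gh I) h.
Proof.
move=> Hloc.
have [XB [al [al' [Ha1 Ha2]]]] := sh_esurj T B.
have HlocX : local_end XB.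
  apply: local_sh_inv (local_transfer Ha2 Ha1 Hloc).
case: (classic (ObI I XB)) => HX.
  have [Z0 HZ0] := Hadd.1; exists Z0, 0; split; split; try exact: Gh_0.
    by move=> W phi _; exists 0; rewrite comp0l; apply: is_zero_mor.
  move=> W psi Hpsi; exists 0; rewrite comp0r.
  have HSI : shift_ideal T I al'.
    exists XB, XB, al', (idm _), (idm _); split=> //; try exact: iso_idm.
      by exists al.
    by rewrite shm_id !cid_l.
  have H0 := proj1 (H1 _) Hpsi _ _ HSI.
  by rewrite -(cid_l psi) -Ha2 -cA H0 comp0r.
have [N [u Hu]] := (Hff XB).1.
have [Q [k [r Hd]]] := dist_ext T u.
have Hr := tri_right Hu Hd.
have [M' [g' Hg']] := min_right Hadd HKS (fun X M M' f h Hf => @Gh_pre _ _ I HI M' M X f h Hf) Hr.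
have [_ Hs] := H2 (local_indec HlocX) HX.
have [Hsl _] := Hs _ _ Hg'.
have [Hl Hrr] := bi_iso Ha1 Ha2 Hsl Hg'.1.
by exists M', (comp al g').
Qed.

End Backward.

Section Restr.
Local Open Scope ring_scope.
Variables (K : fieldType) (C : KCat K).

Lemma restr_inj n M (Xs : 'I_n.+1 -> C) inj pr : @ortho _ _ n.+1 M Xs inj pr ->
  comp (sumE (fun i => inj (widen_ord (leqnSn n) i)) (fun i => pr (widen_ord (leqnSn n) i)))
       (inj ord_max) = 0.
Proof.
move=> Ho; rewrite /sumE comp_suml big1 // => i _.
by rewrite -cA Ho.2 ?comp0r // eq_sym widen_neq.
Qed.

Lemma pr_restr n M (Xs : 'I_n.+1 -> C) inj pr : @ortho _ _ n.+1 M Xs inj pr ->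
  comp (pr ord_max)
   (sumE (fun i => inj (widen_ord (leqnSn n) i)) (fun i => pr (widen_ord (leqnSn n) i))) = 0.
Proof.
move=> Ho; rewrite /sumE comp_sumr big1 // => i _.
by rewrite cA Ho.2 ?comp0l // widen_neq.
Qed.

End Restr.

Section Backward2.
Local Open Scope ring_scope.
Variables (K : fieldType) (C : KCat K) (T : Triangulated C).
Hypothesis (Hadd : Defs.additive C) (HKS : krull_schmidt C).
Local Unset Implicit Arguments.
Variables (I : mor_class C) (HI : is_ideal I).
Local Set Implicit Arguments.
Hypothesis (Hff : functorially_finite I).
Hypothesis H1 : forall (X Y : C) (f : Mor X Y), Gh I f <-> CoGh (shift_ideal T I) f.
Local Close Scope ring_scope.
Hypothesis H2 : forall X : C, indecomposable X -> ~ ObI I X ->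
      (forall (M : C) (f : Mor X M), source_map (Gh I) f -> sink_map (Gh I) f) /\
      (forall (N : C) (g : Mor N (sh T X)), sink_map (Gh I) g -> source_map (Gh I) g).
Local Open Scope ring_scope.
Implicit Types X Y Z W : C.

Lemma BY_sub Y n (Xs : 'I_n -> C) inj pr : @ortho _ _ n Y Xs inj pr ->
  (forall i, local_end (Xs i)) ->
  exists S (f : Mor Y S), [/\ comp f (sumE inj pr) = f,
    (forall W (phi : Mor Y W), Gh I phi -> exists c, comp phi (sumE inj pr) = comp c f)
    & right_approx (Gh I) f].
Proof.
elim: n Xs inj pr => [|n IH] Xs inj pr Ho Hloc.
  have [Z0 HZ0] := Hadd.1; exists Z0, 0; split.
  - by rewrite comp0l.
  - by move=> W phi _; exists 0; rewrite /sumE big_ord0 !comp0r.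
  - split; first exact: Gh_0.
    by move=> W psi _; exists 0; rewrite comp0r; apply: is_zero_mor'.
have Ho' := ortho_restr Ho.
have [S' [f' [Hf'E Hf'l Hf'r]]] := IH _ _ _ Ho' (fun i => Hloc _).
have [SA [fA [HfAl HfAr]]] := sumY Hadd HKS Hff H2 (Hloc ord_max).
have [B [j1 [j2 [q1 [q2 [Hb1 Hb2 Hb3 Hb4 Hb5]]]]]] := Hadd.2 S' SA.
set E' := sumE _ _ in Hf'E Hf'l.
have HE : sumE inj pr = E' + comp (inj ord_max) (pr ord_max) by rewrite sumE_rec.
have HE'i : comp E' (inj ord_max) = 0 by apply: restr_inj.
have HpE' : comp (pr ord_max) E' = 0 by apply: pr_restr.
have Hpi : comp (pr ord_max) (inj ord_max) = idm _ by apply: Ho.1.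
have Hf'i : comp f' (inj ord_max) = 0 by rewrite -Hf'E -cA HE'i comp0r.
clearbody E'.
set i0 := inj ord_max in HE HE'i Hpi Hf'i *; set p0 := pr ord_max in HE HpE' Hpi *.
clearbody i0 p0.
exists B, (comp j1 f' + comp j2 (comp fA p0)); rewrite HE; split.
  rewrite !compDr !compDl -!cA Hf'E HpE' (cext0 _ Hf'i) (cext1 _ Hpi).
  by rewrite !comp0r addr0 add0r.
- move=> W phi Hphi.
  have [c' Hc'] := Hf'l _ phi Hphi.
  have [cA' HcA] := HfAl.2 _ (comp phi i0) (Gh_pre HI i0 Hphi).
  exists (comp c' q1 + comp cA' q2).
  rewrite compDr Hc' cA HcA !compDl !compDr -!cA (cext1 _ Hb1) (cext0 _ Hb4).
  by rewrite (cext0 _ Hb3) (cext1 _ Hb2) !comp0r addr0 add0r.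
- split.
    move=> W i Hi; rewrite compDl -!cA (Hf'r.1 _ i Hi) (HfAl.1 _ _ (I_post HI p0 Hi)).
    by rewrite !comp0r addr0.
  move=> W psi Hpsi.
  have [d1 Hd1] := Hf'r.2 _ (comp q1 psi) (Gh_post q1 Hpsi).
  have [d2 Hd2] := HfAr.2 _ (comp q2 psi) (Gh_post q2 Hpsi).
  exists (comp E' d1 + comp i0 d2).
  rewrite -(cid_l psi) -Hb5 compDl -!cA Hd1 Hd2 !compDl !compDr -!cA.
  rewrite (cext0 _ Hf'i) (cA f' E') Hf'E (cext0 _ HpE') (cext1 _ Hpi).
  by rewrite !comp0r addr0 add0r.
Qed.

Lemma BX_sub Z n (Xs : 'I_n -> C) inj pr : @ortho _ _ n Z Xs inj pr ->
  (forall i, local_end (Xs i)) ->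
  exists Y (h : Mor Y Z), [/\ comp (sumE inj pr) h = h, left_approx (Gh I) h
    & forall W (psi : Mor W Z), Gh I psi -> exists d, comp (sumE inj pr) psi = comp h d].
Proof.
elim: n Xs inj pr => [|n IH] Xs inj pr Ho Hloc.
  have [Z0 HZ0] := Hadd.1; exists Z0, 0; split.
  - by rewrite comp0r.
  - split; first exact: Gh_0.
    by move=> W phi _; exists 0; rewrite comp0r; apply: is_zero_mor.
  - by move=> W psi _; exists 0; rewrite /sumE big_ord0 !comp0l.
have Ho' := ortho_restr Ho.
have [Y' [h' [Hh'E Hh'l Hh'r]]] := IH _ _ _ Ho' (fun i => Hloc _).
have [YB [hB [HBl HBr]]] := sumX Hadd HKS HI Hff H1 H2 (Hloc ord_max).
have [B [j1 [j2 [q1 [q2 [Hb1 Hb2 Hb3 Hb4 Hb5]]]]]] := Hadd.2 Y' YB.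
set E' := sumE _ _ in Hh'E Hh'r.
have HE : sumE inj pr = E' + comp (inj ord_max) (pr ord_max) by rewrite sumE_rec.
have HE'i : comp E' (inj ord_max) = 0 by apply: restr_inj.
have HpE' : comp (pr ord_max) E' = 0 by apply: pr_restr.
have Hpi : comp (pr ord_max) (inj ord_max) = idm _ by apply: Ho.1.
have Hph' : comp (pr ord_max) h' = 0 by rewrite -Hh'E cA HpE' comp0l.
clearbody E'.
set i0 := inj ord_max in HE HE'i Hpi *; set p0 := pr ord_max in HE HpE' Hpi Hph' *.
clearbody i0 p0.
exists B, (comp h' q1 + comp i0 (comp hB q2)); rewrite HE; split.
- rewrite !compDl !compDr -!cA (cA E' h') Hh'E (cext0 _ HE'i) (cext0 _ Hph') (cext1 _ Hpi).
  by rewrite !comp0r addr0 add0r.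
- split.
    move=> W i Hi; rewrite compDl -!cA (Hh'l.1 _ _ (I_post HI q1 Hi)).
    by rewrite (HBl.1 _ _ (I_post HI q2 Hi)) !comp0r addr0.
  move=> W phi Hphi.
  have [c1 Hc1] := Hh'l.2 _ (comp phi j1) (Gh_pre HI j1 Hphi).
  have [c2 Hc2] := HBl.2 _ (comp phi j2) (Gh_pre HI j2 Hphi).
  exists (comp c1 E' + comp c2 p0).
  rewrite -{1}(cid_r phi) -Hb5 compDr !cA Hc1 Hc2 !compDl !compDr -!cA.
  rewrite (cA E' h') Hh'E (cext0 _ HE'i) (cext0 _ Hph') (cext1 _ Hpi).
  by rewrite !comp0r addr0 add0r.
move=> W psi Hpsi.
have [d1 Hd1] := Hh'r _ psi Hpsi.
have [d2 Hd2] := HBr.2 _ (comp p0 psi) (Gh_post p0 Hpsi).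
exists (comp j1 d1 + comp j2 d2).
rewrite compDl Hd1 -cA Hd2 !compDl !compDr -!cA.
rewrite (cext1 _ Hb1) (cext0 _ Hb4) (cext0 _ Hb3) (cext1 _ Hb2).
by rewrite !comp0r addr0 add0r.
Qed.

Lemma backward : AR_ideal T I.
Proof.
split=> //.
  move=> X; have [n [Xs [inj [pr [K1 K2 K3 K4]]]]] := HKS (sh T X).
  have Ho : ortho inj pr by split.
  have [Y [h [_ Hl Hr]]] := BX_sub Ho K4.
  have Hr' : right_approx (Gh I) h.
    split; first exact: Hl.1.
    by move=> W psi Hpsi; have [d Hd] := Hr _ psi Hpsi; exists d; rewrite -Hd /sumE K3 cid_l.
  have [N [u [v [Hd Hu Hv]]]] := AR_of_bi Hadd HI Hff H1 Hl Hr'.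
  by exists N, Y, u, v, h.
move=> Y; have [n [Xs [inj [pr [K1 K2 K3 K4]]]]] := HKS Y.
have Ho : ortho inj pr by split.
have [S [f [_ Hfl Hfr]]] := BY_sub Ho K4.
have Hl : left_approx (Gh I) f.
  split; first exact: Hfr.1.
  by move=> W phi Hphi; have [c Hc] := Hfl _ phi Hphi; exists c; rewrite -Hc /sumE K3 cid_r.
have [Z [al [al' [Ha1 Ha2]]]] := sh_esurj T S.
have [Hl' Hr'] := bi_iso Ha2 Ha1 Hl Hfr.
have [N [u [v [Hd Hu Hv]]]] := AR_of_bi Hadd HI Hff H1 Hl' Hr'.
by exists Z, N, u, v, (comp al' f).
Qed.

End Backward2.

End Dev.
Unset Implicit Arguments. Set Strict Implicit. Set Printing Implicit Defensive.

Theorem theorem3p8 (K : closedFieldType) (C : KCat K)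
  (Hadd : additive C) (HKS : krull_schmidt C) (T : Triangulated C)
  (I : mor_class C) (HI : is_ideal I) (Hff : functorially_finite I) :
  AR_ideal T I <->
  ((forall (X Y : C) (f : Mor X Y), Gh I f <-> CoGh (shift_ideal T I) f) /\
   (forall X : C, indecomposable X -> ~ ObI I X ->
      (forall (M : C) (f : Mor X M), source_map (Gh I) f -> sink_map (Gh I) f) /\
      (forall (N : C) (g : Mor N (sh T X)), sink_map (Gh I) g -> source_map (Gh I) g))).
Proof.
split.
  move=> HAR; split.
    move=> X Y f; split.
      exact: (Dev.fw_Gh_CG Hadd HI HAR).
    exact: (Dev.fw_CG_Gh Hadd HI HAR).
  move=> X Hind HnI; split.
    exact: (Dev.fw_2a Hadd HKS HI HAR Hind HnI).
  exact: (Dev.fw_2b Hadd HKS HI HAR Hind HnI).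
move=> [H1 H2]; apply: (Dev.backward Hadd HKS HI Hff H1); exact H2.
Qed.
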